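(* Let $n\ge2$ be an integer and $f(u,\bar u)=u^n+u+\bar u$. Then $0$ is an isolated root of $f$ and \[ \operatorname{sm}(f,0)=\begin{cases}1,& n \text{ even},\\ -1,& n\equiv3\pmod 4,\\ 1,& n\equiv1\pmod 4.\end{cases} \]
   Context: For a mixed polynomial $h(u,\bar u)$ in one complex variable with isolated root $\alpha$, the multiplicity with sign $\operatorname{sm}(h,\alpha)$ is the mapping degree of $h/|h|:\{|u-\alpha|=\varepsilon\}\to S^1$ for small $\varepsilon>0$, the circle oriented counterclockwise. *)

(* Defs.v *)
From Stdlib Require Import Reals ZArith Arith.
From Coquelicot Require Import Coquelicot.
Open Scope R_scope.

(* A mixed polynomial in one complex variable is viewed as a function C -> C
   (of u and conj u). *)

Definition isolated_root (h : C -> C) (alpha : C) : Prop :=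
  h alpha = RtoC 0 /\
  exists eps : R, 0 < eps /\
    forall u : C, 0 < Cmod (Cminus u alpha) < eps -> h u <> RtoC 0.

Definition circ (alpha : C) (eps t : R) : C :=
  Cplus alpha (eps * cos t, eps * sin t).

(* Mapping degree of h/|h| restricted to the circle |u - alpha| = eps
   (counterclockwise), given via a continuous lift of the argument:
   deg = k iff some continuous theta with h(circ t) = |h(circ t)| e^{i theta(t)}
   on [0, 2 PI] satisfies theta(2 PI) - theta(0) = 2 PI k. *)
Definition circle_degree (h : C -> C) (alpha : C) (eps : R) (k : Z) : Prop :=
  exists theta : R -> R,
    (forall t, continuity_pt theta t) /\
    (forall t, 0 <= t <= 2 * PI ->
       h (circ alpha eps t) =
       (Cmod (h (circ alpha eps t)) * cos (theta t),
        Cmod (h (circ alpha eps t)) * sin (theta t))) /\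
    theta (2 * PI) - theta 0 = 2 * PI * IZR k.

Definition sm_eq (h : C -> C) (alpha : C) (k : Z) : Prop :=
  exists eps0 : R, 0 < eps0 /\
    forall eps, 0 < eps < eps0 -> circle_degree h alpha eps k.

Definition f_mixed (n : nat) (u : C) : C :=
  Cplus (Cplus (Cpow u n) u) (Cconj u).

(* Main.v *)
Require Import Defs.
From Stdlib Require Import Reals ZArith Arith.
From Coquelicot Require Import Coquelicot.
From Stdlib Require Import Lra Lia.
Open Scope R_scope.

Lemma shift_pi (q : Z) : exists s, (s = 1 \/ s = -1) /\
  forall x, cos (x + IZR q * PI) = s * cos x /\ sin (x + IZR q * PI) = s * sin x.
Proof.
  induction q using Z.peano_ind.
  - exists 1; split; [left; reflexivity|]. intro x; rewrite Rmult_0_l, Rplus_0_r; lra.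
  - destruct IHq as [s [Hs H]]. exists (-s). split; [lra|]. intro x.
    rewrite succ_IZR. replace (x + (IZR q + 1) * PI) with ((x + IZR q * PI) + PI) by ring.
    rewrite neg_cos, neg_sin. destruct (H x) as [H1 H2]. rewrite H1, H2; lra.
  - destruct IHq as [s [Hs H]]. exists (-s). split; [lra|]. intro x.
    replace (IZR (Z.pred q)) with (IZR q - 1) by (unfold Z.pred; rewrite plus_IZR; simpl; ring). destruct (H (x - PI)) as [H1 H2].
    replace (x - PI + IZR q * PI) with (x + (IZR q - 1) * PI) in H1, H2 by ring.
    rewrite H1, H2.
    pose proof (neg_cos (x - PI)) as C; pose proof (neg_sin (x - PI)) as S.
    replace (x - PI + PI) with x in C, S by ring. rewrite C, S; lra.
Qed.

Lemma decomp (t : R) : exists q : Z, exists u, t = PI/2 + IZR q * PI + u /\ - (PI/2) <= u <= PI/2.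
Proof.
  pose proof PI_RGT_0 as Hp.
  destruct (archimed ((t - PI/2)/PI - 1/2)) as [H1 H2].
  exists (up ((t - PI/2)/PI - 1/2)). exists (t - PI/2 - IZR (up ((t - PI / 2) / PI - 1 / 2)) * PI).
  split; [ring|].
  set (k := IZR (up ((t - PI/2)/PI - 1/2))) in *.
  assert (E : (t - PI/2)/PI * PI = t - PI/2) by (field; lra).
  split; nra.
Qed.

Lemma small_u (N : R) (u d : R) : 1 <= N -> -(PI/2) <= u <= PI/2 ->
  sin u * sin u <= d -> d < sin (PI/(2*N)) * sin (PI/(2*N)) -> Rabs u < PI / (2*N).
Proof.
  intros HN Hu Hs Hd. pose proof PI_RGT_0.
  assert (B : PI/(2*N) <= PI/2).
  { unfold Rdiv. apply Rmult_le_compat_l; [lra|]. apply Rinv_le_contravar; lra. }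
  assert (B0 : 0 < PI/(2*N)) by (apply Rdiv_lt_0_compat; lra).
  destruct (Rlt_or_le (Rabs u) (PI/(2*N))) as [?|Hc]; [assumption|exfalso].
  assert (S0 : 0 < sin (PI/(2*N))) by (apply sin_gt_0; lra).
  assert (Sa : sin (PI/(2*N)) <= sin (Rabs u)).
  { apply sin_incr_1; unfold Rabs in *; destruct (Rcase_abs u); lra. }
  assert (sin (Rabs u) * sin (Rabs u) = sin u * sin u).
  { unfold Rabs; destruct (Rcase_abs u); [rewrite sin_neg|]; ring. }
  nra.
Qed.


Lemma cos_t_u q u : cos (PI/2 + IZR q * PI + u) * cos (PI/2 + IZR q * PI + u) = sin u * sin u.
Proof.
  destruct (shift_pi q) as [s [Hs H]].
  replace (PI/2 + IZR q * PI + u) with ((PI/2 + u) + IZR q * PI) by ring.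
  destruct (H (PI/2+u)) as [H1 _]. rewrite H1, cos_plus, cos_PI2, sin_PI2.
  destruct Hs; subst; ring.
Qed.

Lemma Nu_bound (N u : R) : 1 <= N -> Rabs u < PI/(2*N) -> Rabs (N*u) < PI/2.
Proof.
  intros. rewrite Rabs_mult, (Rabs_right N) by lra.
  apply Rmult_lt_compat_l with (r := N) in H0; [|lra].
  replace (N * (PI/(2*N))) with (PI/2) in H0 by (field; lra). lra.
Qed.

Lemma coreA (l : nat) (d : R) : (1 <= l)%nat -> 0 < d ->
  d / 2 < sin (PI/(2*INR (4*l))) * sin (PI/(2*INR (4*l))) ->
  forall t, 0 < 2 * cos t * cos t + d * cos (INR (4*l) * t).
Proof.
  intros Hl Hd Hs t.
  destruct (Rlt_or_le 0 (2 * cos t * cos t + d * cos (INR (4*l) * t))) as [?|Hc]; [assumption|exfalso].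
  assert (HN : 1 <= INR (4*l)) by (rewrite <- INR_1; apply le_INR; lia).
  pose proof (COS_bound (INR (4*l) * t)) as Cb.
  destruct (decomp t) as [q [u [Ht Hu]]].
  pose proof (cos_t_u q u) as Ctu. rewrite <- Ht in Ctu.
  assert (Ha : Rabs u < PI/(2*INR (4*l))).
  { apply (small_u _ u (d/2)); try assumption. nra. }
  pose proof (Nu_bound _ _ HN Ha) as Hb.
  assert (E : INR (4*l) * t = (INR (4*l) * u + IZR (Z.of_nat l * (1 + 2*q)) * PI) + IZR (Z.of_nat l * (1 + 2*q)) * PI).
  { rewrite Ht, mult_IZR, plus_IZR, mult_IZR, <- INR_IZR_INZ, mult_INR. replace (INR 4) with 4 by (simpl; ring). field. }
  destruct (shift_pi (Z.of_nat l * (1 + 2*q))) as [s [Hs1 H]].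
  rewrite E in Hc. destruct (H (INR (4 * l) * u + IZR (Z.of_nat l * (1 + 2 * q)) * PI)) as [H1 _].
  destruct (H (INR (4 * l) * u)) as [H2 _]. rewrite H1, H2 in Hc.
  assert (0 < cos (INR (4*l) * u)).
  { apply cos_gt_0; unfold Rabs in Hb; destruct (Rcase_abs (INR (4 * l) * u)); lra. }
  assert (0 <= cos t * cos t) by nra.
  destruct Hs1; subst; nra.
Qed.

Lemma coreB (j : nat) (d : R) : 0 < d ->
  d / 2 < sin (PI/(2*INR (2*j+1))) * sin (PI/(2*INR (2*j+1))) ->
  forall t, 0 < 2 * cos t * cos t + d * cos (INR (2*j+1) * t) \/
            d * sin (INR (2*j+1) * t) - 2 * cos t * sin t <> 0.
Proof.
  intros Hd Hs t.
  destruct (Rlt_or_le 0 (2 * cos t * cos t + d * cos (INR (2*j+1) * t))) as [?|Hc]; [left; assumption|right; intro Him].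
  set (N := INR (2*j+1)) in *.
  assert (HN : 1 <= N) by (unfold N; rewrite <- INR_1; apply le_INR; lia).
  pose proof PI_RGT_0.
  pose proof (COS_bound (N * t)) as Cb.
  destruct (decomp t) as [q [u [Ht Hu]]].
  pose proof (cos_t_u q u) as Ctu. rewrite <- Ht in Ctu.
  assert (Ha : Rabs u < PI/(2*N)).
  { apply (small_u _ u (d/2)); try assumption. nra. }
  pose proof (Nu_bound _ _ HN Ha) as Hb.
  assert (PI/(2*N) <= PI/2).
  { unfold Rdiv. apply Rmult_le_compat_l; [lra|]. apply Rinv_le_contravar; lra. }
  assert (E : N * t = (N * u + PI/2) + IZR (Z.of_nat j + Z.of_nat (2*j+1) * q) * PI).
  { unfold N; rewrite Ht, plus_IZR, mult_IZR, <- !INR_IZR_INZ, !plus_INR, mult_INR.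
    replace (INR 2) with 2 by (simpl; ring). replace (INR 1) with 1 by (simpl; ring). field. }
  destruct (shift_pi (Z.of_nat j + Z.of_nat (2*j+1) * q)) as [sg [Hsg H1]].
  destruct (H1 (N * u + PI/2)) as [C1 S1].
  rewrite E, C1, cos_plus, cos_PI2, sin_PI2 in Hc.
  rewrite E, S1, sin_plus, cos_PI2, sin_PI2 in Him.
  destruct (shift_pi q) as [s [Hs2 H2]].
  destruct (H2 (PI/2 + u)) as [C2 S2].
  replace (PI / 2 + u + IZR q * PI) with t in C2, S2 by (rewrite Ht; ring).
  rewrite C2, S2, cos_plus, sin_plus, cos_PI2, sin_PI2 in Him.
  assert (cNu : 0 < cos (N*u)).
  { apply cos_gt_0; unfold Rabs in Hb; destruct (Rcase_abs (N * u)); lra. }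
  assert (cu : 0 < cos u).
  { apply cos_gt_0; unfold Rabs in Ha; destruct (Rcase_abs u); lra. }
  assert (Hss : s * s = 1) by (destruct Hs2; subst; ring).
  assert (Him' : d * sg * cos (N*u) + 2 * sin u * cos u = 0).
  { replace (2 * sin u * cos u) with (2 * sin u * cos u * (s*s)) by (rewrite Hss; ring). lra. }
  assert (Pos : 0 < u -> 0 < sin u /\ 0 < sin (N*u)).
  { intro. assert (Rabs u = u) by (apply Rabs_right; lra).
    assert (Rabs (N*u) = N*u) by (apply Rabs_right; nra).
    split; apply sin_gt_0; nra. }
  assert (Neg : u < 0 -> sin u < 0 /\ sin (N*u) < 0).
  { intro. assert (Rabs u = -u) by (apply Rabs_left; lra).
    assert (Rabs (N*u) = -(N*u)) by (apply Rabs_left; nra).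
    assert (A1 : 0 < sin (-u)) by (apply sin_gt_0; nra).
    assert (A2 : 0 < sin (- (N * u))) by (apply sin_gt_0; nra).
    rewrite sin_neg in A1, A2. split; lra. }
  destruct (Rtotal_order u 0) as [Hlt|[Heq|Hgt]].
  - destruct (Neg Hlt). destruct Hsg; subst sg; nra.
  - subst u. rewrite sin_0 in Him'. rewrite Rmult_0_r, cos_0 in *. destruct Hsg; subst; nra.
  - destruct (Pos Hgt). destruct Hsg; subst sg; nra.
Qed.


Lemma demoivre (r t : R) (n : nat) :
  Cpow (r * cos t, r * sin t) n = (r ^ n * cos (INR n * t), r ^ n * sin (INR n * t)).
Proof.
  induction n.
  - simpl. rewrite Rmult_0_l, cos_0, sin_0. unfold RtoC. f_equal; ring.
  - simpl Cpow. rewrite IHn. unfold Cmult; simpl fst; simpl snd.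
    rewrite S_INR. replace ((INR n + 1) * t) with (INR n * t + t) by ring.
    rewrite cos_plus, sin_plus. f_equal; simpl; ring.
Qed.

Lemma half_angle (P Q : R) : 0 < sqrt (P^2 + Q^2) + P ->
  sqrt (P^2+Q^2) * cos (2 * atan (Q / (sqrt (P^2+Q^2) + P))) = P /\
  sqrt (P^2+Q^2) * sin (2 * atan (Q / (sqrt (P^2+Q^2) + P))) = Q.
Proof.
  intro H.
  set (r := sqrt (P^2+Q^2)) in *.
  assert (Hr : r * r = P^2 + Q^2) by (apply sqrt_sqrt; nra).
  assert (r0 : 0 <= r) by apply sqrt_pos.
  set (T := Q / (r + P)).
  assert (Hs : sqrt (1 + T²) * sqrt (1 + T²) = 1 + T²) by (apply sqrt_sqrt; unfold Rsqr; nra).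
  assert (Hs0 : 0 < sqrt (1 + T²)) by (apply sqrt_lt_R0; unfold Rsqr; nra).
  assert (Hc : cos (atan T) * cos (atan T) = 1 / (1 + T*T)).
  { rewrite cos_atan. unfold Rsqr in *.
    replace (1 / sqrt (1 + T*T) * (1 / sqrt (1 + T*T))) with (1 / (sqrt (1+T*T) * sqrt (1+T*T))) by (field; lra).
    rewrite Hs. reflexivity. }
  assert (Hsn : sin (atan T) = T * cos (atan T)).
  { rewrite sin_atan, cos_atan. field. lra. }
  rewrite cos_2a, sin_2a, Hsn.
  assert (D : r + P <> 0) by lra.
  assert (E : r*((r+P)^2-Q^2) - P*((r+P)^2+Q^2) = (r+P)*(r*r - (P^2+Q^2))) by ring.
  rewrite Hr in E. replace (P^2+Q^2 - (P^2+Q^2)) with 0 in E by ring.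
  assert (TT : T*T*(r+P)^2 = Q^2) by (unfold T; field; auto).
  assert (T1 : T*(r+P) = Q) by (unfold T; field; auto).
  assert (Dp : (r+P)^2 <> 0) by (apply pow_nonzero; auto).
  assert (K : r * (1 - T*T) = P * (1 + T*T) /\ r * (2 * T) = Q * (1 + T*T)).
  { split; apply (Rmult_eq_reg_r ((r+P)^2)); auto.
    - replace (r * (1 - T*T) * (r+P)^2) with (r*(r+P)^2 - r*(T*T*(r+P)^2)) by ring.
      replace (P * (1 + T*T) * (r+P)^2) with (P*(r+P)^2 + P*(T*T*(r+P)^2)) by ring.
      rewrite TT. lra.
    - replace (r * (2*T) * (r+P)^2) with (2*r*(r+P) * (T*(r+P))) by ring.
      replace (Q * (1 + T*T) * (r+P)^2) with (Q*(r+P)^2 + Q*(T*T*(r+P)^2)) by ring.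
      rewrite TT, T1. apply Rminus_diag_uniq.
      replace (2 * r * (r + P) * Q - (Q * (r + P) ^ 2 + Q * Q ^ 2)) with (Q*(r*r-(P^2+Q^2))) by ring.
      rewrite Hr; ring. }
  assert (Pos : 0 < 1 + T*T) by nra.
  destruct K as [K1 K2]. split.
  - replace (r * (cos (atan T) * cos (atan T) - T * cos (atan T) * (T * cos (atan T))))
      with (r * (1 - T*T) * (cos (atan T) * cos (atan T))) by ring.
    rewrite K1, Hc. field. lra.
  - replace (r * (2 * (T * cos (atan T)) * cos (atan T)))
      with (r * (2*T) * (cos (atan T) * cos (atan T))) by ring.
    rewrite K2, Hc. field. lra.
Qed.


Lemma polar (u : C) : 0 < Cmod u -> exists t, u = circ (RtoC 0) (Cmod u) t.
Proof.
  destruct u as [a b]. intro H. unfold Cmod in *. simpl fst in *; simpl snd in *.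
  set (r := sqrt (a^2 + b^2)) in *.
  assert (Hr : r * r = a^2 + b^2) by (apply sqrt_sqrt; nra).
  assert (B : -1 <= a/r <= 1).
  { assert (a/r*r = a) by (field; lra).
    split; apply (Rmult_le_reg_r r); auto; nra. }
  assert (S : sqrt (1 - (a/r)²) = Rabs (b / r)).
  { rewrite <- sqrt_Rsqr_abs. f_equal. unfold Rsqr.
    replace 1 with ((a^2+b^2)/(r*r)) at 1 by (rewrite <- Hr; field; lra). field. lra. }
  assert (Ca : cos (acos (a/r)) = a/r) by (apply cos_acos; auto).
  unfold circ, Cplus, RtoC; simpl fst; simpl snd.
  destruct (Rle_dec 0 b).
  - exists (acos (a/r)). rewrite Ca, sin_acos, S by auto. rewrite Rabs_right.
    + f_equal; field; lra.
    + apply Rle_ge. unfold Rdiv. apply Rmult_le_pos; auto. left; apply Rinv_0_lt_compat; auto.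
  - exists (- acos (a/r)). rewrite cos_neg, sin_neg, Ca, sin_acos, S by auto. rewrite Rabs_left.
    + f_equal; field; lra.
    + unfold Rdiv. apply Rmult_neg_pos; [lra|]. apply Rinv_0_lt_compat; auto.
Qed.

Definition Xf n eps t := eps ^ n * cos (INR n * t) + 2 * eps * cos t.
Definition Yf n eps t := eps ^ n * sin (INR n * t).

Lemma f_circ n eps t : f_mixed n (circ (RtoC 0) eps t) = (Xf n eps t, Yf n eps t).
Proof.
  assert (E : circ (RtoC 0) eps t = (eps * cos t, eps * sin t)).
  { unfold circ, Cplus, RtoC; simpl; f_equal; ring. }
  rewrite E. unfold f_mixed. rewrite demoivre. unfold Cplus, Cconj, Xf, Yf; simpl; f_equal; ring.
Qed.


Definition M (n : nat) : Z :=
  if Nat.even n then 1%Z else if Nat.eqb (Nat.modulo n 4) 3 then (-1)%Z else 1%Z.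

Lemma d0pos (N : nat) : (1 <= N)%nat -> 0 < 2 * (sin (PI/(2*INR N)) * sin (PI/(2*INR N))).
Proof.
  intro H. assert (HN : 1 <= INR N) by (rewrite <- INR_1; apply le_INR; lia).
  pose proof PI_RGT_0.
  assert (PI/(2*INR N) <= PI/2).
  { unfold Rdiv. apply Rmult_le_compat_l; [lra|]. apply Rinv_le_contravar; lra. }
  assert (0 < PI/(2*INR N)) by (apply Rdiv_lt_0_compat; lra).
  assert (0 < sin (PI/(2*INR N))) by (apply sin_gt_0; lra). nra.
Qed.

Lemma key (n : nat) : (2 <= n)%nat -> exists d0, 0 < d0 /\ forall d, 0 < d < d0 -> forall t,
  0 < 2 * cos t * cos t + d * cos ((INR n - IZR (M n)) * t) \/
  d * sin ((INR n - IZR (M n)) * t) - 2 * IZR (M n) * cos t * sin t <> 0.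
Proof.
  intro hn. pose proof (Nat.div_mod_eq n 4) as Hd. pose proof (Nat.mod_upper_bound n 4 ltac:(lia)) as Hu.
  set (q := (n / 4)%nat) in *. set (r := (n mod 4)%nat) in *.
  unfold M. fold r.
  assert (Ev : Nat.even n = Nat.even r).
  { rewrite Hd. replace (4 * q + r)%nat with (r + 2 * (2*q))%nat by lia. apply Nat.even_add_mul_2. }
  rewrite Ev.
  destruct r as [|[|[|[|r]]]]; simpl; try lia.
  -
    set (j := (2*q - 1)%nat).
    exists (2 * (sin (PI/(2*INR (2*j+1))) * sin (PI/(2*INR (2*j+1))))).
    split; [apply d0pos; lia|]. intros d [H1 H2] t.
    replace (INR n - 1) with (INR (2*j+1)) by (replace n with (2*j+1+1)%nat by lia; rewrite !plus_INR; change (INR 1) with 1; ring).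
    destruct (coreB j d H1 ltac:(lra) t) as [?|?]; [left; lra|right; lra].
  -
    exists (2 * (sin (PI/(2*INR (4*q))) * sin (PI/(2*INR (4*q))))).
    split; [apply d0pos; lia|]. intros d [H1 H2] t. left.
    replace (INR n - 1) with (INR (4*q)) by (replace n with (4*q+1)%nat by lia; rewrite !plus_INR; change (INR 1) with 1; ring).
    apply coreA; auto; [lia|lra].
  - set (j := (2*q)%nat).
    exists (2 * (sin (PI/(2*INR (2*j+1))) * sin (PI/(2*INR (2*j+1))))).
    split; [apply d0pos; lia|]. intros d [H1 H2] t.
    replace (INR n - 1) with (INR (2*j+1)) by (replace n with (2*j+1+1)%nat by lia; rewrite !plus_INR; change (INR 1) with 1; ring).
    destruct (coreB j d H1 ltac:(lra) t) as [?|?]; [left; lra|right; lra].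
  - exists (2 * (sin (PI/(2*INR (4*(q+1)))) * sin (PI/(2*INR (4*(q+1)))))).
    split; [apply d0pos; lia|]. intros d [H1 H2] t. left.
    replace (INR n - -1) with (INR (4*(q+1))) by (replace (4*(q+1))%nat with (n+1)%nat by lia; rewrite !plus_INR; change (INR 1) with 1; ring).
    apply coreA; auto; [lia|lra].
Qed.


Definition Pf n eps m t := Xf n eps t * cos (m * t) + Yf n eps t * sin (m * t).
Definition Qf n eps m t := Yf n eps t * cos (m * t) - Xf n eps t * sin (m * t).
Definition theta n eps m t :=
  m * t + 2 * atan (Qf n eps m t / (sqrt (Pf n eps m t ^ 2 + Qf n eps m t ^ 2) + Pf n eps m t)).

Lemma PQ_eq n eps m t : (1 <= n)%nat -> (m = 1 \/ m = -1) ->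
  Pf n eps m t = eps * (2 * cos t * cos t + eps ^ (n-1) * cos ((INR n - m) * t)) /\
  Qf n eps m t = eps * (eps ^ (n-1) * sin ((INR n - m) * t) - 2 * m * cos t * sin t).
Proof.
  intros Hn Hm. unfold Pf, Qf, Xf, Yf.
  replace (eps ^ n) with (eps * eps ^ (n-1)) by (destruct n; [lia|]; simpl; rewrite Nat.sub_0_r; ring).
  replace ((INR n - m) * t) with (INR n * t - m * t) by ring.
  rewrite cos_minus, sin_minus.
  destruct Hm; subst m; rewrite ?Rmult_1_l;
  [|replace (-1 * t) with (- t) by ring; rewrite cos_neg, sin_neg]; split; ring.
Qed.

Lemma theta_cont n eps m t : 0 < sqrt (Pf n eps m t ^ 2 + Qf n eps m t ^ 2) + Pf n eps m t ->
  continuity_pt (theta n eps m) t.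
Proof.
  intro H.
  assert (H1 : 0 < Pf n eps m t ^ 2 + Qf n eps m t ^ 2).
  { destruct (Req_dec (Pf n eps m t ^ 2 + Qf n eps m t ^ 2) 0) as [E|E].
    - rewrite E, sqrt_0 in H. assert (Pf n eps m t = 0) by nra. lra.
    - nra. }
  assert (H2 : sqrt (Pf n eps m t ^ 2 + Qf n eps m t ^ 2) + Pf n eps m t <> 0) by lra.
  apply continuity_pt_filterlim. apply (ex_derive_continuous (theta n eps m)).
  unfold theta, Pf, Qf, Xf, Yf in *. auto_derive.
  repeat split.
  - match goal with |- 0 < ?e => replace e with (((eps ^ n * cos (INR n * t) + 2 * eps * cos t) * cos (m * t) +
        eps ^ n * sin (INR n * t) * sin (m * t)) ^ 2 +
       (eps ^ n * sin (INR n * t) * cos (m * t) -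
        (eps ^ n * cos (INR n * t) + 2 * eps * cos t) * sin (m * t)) ^ 2) by ring end. exact H1.
  - match goal with |- sqrt ?e + _ <> 0 => replace e with (((eps ^ n * cos (INR n * t) + 2 * eps * cos t) * cos (m * t) +
        eps ^ n * sin (INR n * t) * sin (m * t)) ^ 2 +
       (eps ^ n * sin (INR n * t) * cos (m * t) -
        (eps ^ n * cos (INR n * t) + 2 * eps * cos t) * sin (m * t)) ^ 2) by ring end. exact H2.
Qed.

Lemma pow_small (e : R) (k : nat) : 0 < e < 1 -> (1 <= k)%nat -> 0 < e ^ k <= e.
Proof.
  intros He Hk. destruct k; [lia|]. simpl. split.
  - apply Rmult_lt_0_compat; [lra|apply pow_lt; lra].
  - destruct k. simpl; lra. assert (0 <= e ^ S k < 1) by (apply pow_lt_1_compat; [lra|lia]). nra.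
Qed.

Lemma periodic n eps m : (m = 1 \/ m = -1) ->
  Pf n eps m (2*PI) = Pf n eps m 0 /\ Qf n eps m (2*PI) = Qf n eps m 0.
Proof.
  intro Hm.
  assert (C1 : cos (INR n * (2*PI)) = cos (INR n * 0)).
  { rewrite Rmult_0_r, <- (cos_period 0 n). f_equal; ring. }
  assert (S1 : sin (INR n * (2*PI)) = sin (INR n * 0)).
  { rewrite Rmult_0_r, <- (sin_period 0 n). f_equal; ring. }
  assert (C2 : cos (m * (2*PI)) = cos (m * 0) /\ sin (m * (2*PI)) = sin (m * 0)).
  { rewrite Rmult_0_r, cos_0, sin_0. destruct Hm; subst m.
    - rewrite Rmult_1_l, cos_2PI, sin_2PI; auto.
    - replace (-1 * (2*PI)) with (- (2*PI)) by ring. rewrite cos_neg, sin_neg, cos_2PI, sin_2PI. split; ring. }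
  destruct C2 as [C2 S2].
  unfold Pf, Qf, Xf, Yf. rewrite C1, S1, C2, S2, cos_2PI, <- cos_0.
  replace (cos (2 * PI)) with 1 by (symmetry; apply cos_2PI).
  split; reflexivity.
Qed.

Theorem mainTheorem8 (n : nat) (hn : (2 <= n)%nat) :
  isolated_root (f_mixed n) (RtoC 0) /\
  sm_eq (f_mixed n) (RtoC 0)
    (if Nat.even n then 1%Z
     else if Nat.eqb (Nat.modulo n 4) 3 then (-1)%Z
     else 1%Z).
Proof.
  change (if Nat.even n then 1%Z else if Nat.eqb (Nat.modulo n 4) 3 then (-1)%Z else 1%Z) with (M n).
  destruct (key n hn) as [d0 [Hd0 Hk]].
  set (eps0 := Rmin 1 d0).
  assert (He0 : 0 < eps0) by (unfold eps0; apply Rmin_glb_lt; lra).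
  set (m := IZR (M n)).
  assert (Hm : m = 1 \/ m = -1).
  { unfold m, M. destruct (Nat.even n); [left; reflexivity|].
    destruct (Nat.eqb (n mod 4) 3); [right|left]; reflexivity. }
  assert (Hpos : forall eps, 0 < eps < eps0 -> forall t,
            0 < sqrt (Pf n eps m t ^ 2 + Qf n eps m t ^ 2) + Pf n eps m t).
  { intros eps He t.
    assert (e1 : eps < 1) by (pose proof (Rmin_l 1 d0); unfold eps0 in *; lra).
    assert (e2 : eps < d0) by (pose proof (Rmin_r 1 d0); unfold eps0 in *; lra).
    destruct (pow_small eps (n-1) ltac:(lra) ltac:(lia)) as [p1 p2].
    destruct (PQ_eq n eps m t ltac:(lia) Hm) as [EP EQ].
    set (r := sqrt (Pf n eps m t ^ 2 + Qf n eps m t ^ 2)).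
    assert (Hr : r * r = Pf n eps m t ^ 2 + Qf n eps m t ^ 2) by (apply sqrt_sqrt; nra).
    assert (r0 : 0 <= r) by apply sqrt_pos.
    destruct (Hk (eps ^ (n-1)) ltac:(lra) t) as [K|K].
    - assert (0 < Pf n eps m t) by (rewrite EP; apply Rmult_lt_0_compat; [lra|exact K]). lra.
    - assert (Qf n eps m t <> 0) by (rewrite EQ; apply Rmult_integral_contrapositive; split; [lra|exact K]).
      assert (0 < Qf n eps m t ^ 2) by (simpl; rewrite Rmult_1_r; apply Rsqr_pos_lt; auto).
      nra. }
  split.
  - split.
    + unfold f_mixed, Cplus, Cconj, RtoC. destruct n as [|n']; [lia|]. simpl. f_equal; ring.
    + exists eps0. split; [exact He0|]. intros u [H1 H2].
      assert (Eu : Cminus u (RtoC 0) = u) by (destruct u; unfold Cminus, Cplus, Copp, RtoC; simpl; f_equal; ring).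
      rewrite Eu in H1, H2.
      destruct (polar u H1) as [t Ht]. rewrite Ht, f_circ. intro E.
      injection E as EX EY.
      pose proof (Hpos (Cmod u) (conj H1 H2) t) as P.
      unfold Pf, Qf in P. rewrite EX, EY in P.
      replace ((0 * cos (m * t) + 0 * sin (m * t)) ^ 2 + (0 * cos (m * t) - 0 * sin (m * t)) ^ 2) with 0 in P by ring.
      rewrite sqrt_0 in P. lra.
  - exists eps0. split; [exact He0|]. intros eps He.
    exists (theta n eps m). split; [|split].
    + intro t. apply theta_cont. apply Hpos; auto.
    + intros t _. rewrite f_circ. unfold Cmod; simpl fst; simpl snd.
      assert (Sm : sin (m*t) ^ 2 + cos (m*t) ^ 2 = 1) by (rewrite <- (sin2_cos2 (m*t)); unfold Rsqr; ring).
      assert (EM : Xf n eps t ^ 2 + Yf n eps t ^ 2 = Pf n eps m t ^ 2 + Qf n eps m t ^ 2).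
      { unfold Pf, Qf. transitivity ((Xf n eps t ^ 2 + Yf n eps t ^ 2) * (sin (m*t) ^ 2 + cos (m*t) ^ 2)); [rewrite Sm; ring|ring]. }
      rewrite EM.
      destruct (half_angle (Pf n eps m t) (Qf n eps m t) (Hpos eps He t)) as [HA HB].
      unfold theta. rewrite cos_plus, sin_plus.
      set (r := sqrt (Pf n eps m t ^ 2 + Qf n eps m t ^ 2)) in *.
      set (a2 := 2 * atan (Qf n eps m t / (r + Pf n eps m t))) in *.
      f_equal.
      * replace (r * (cos (m * t) * cos a2 - sin (m * t) * sin a2)) with (cos (m*t) * (r * cos a2) - sin (m*t) * (r * sin a2)) by ring.
        rewrite HA, HB. unfold Pf, Qf.
        transitivity (Xf n eps t * (sin (m*t) ^ 2 + cos (m*t) ^ 2)); [rewrite Sm; ring|ring].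
      * replace (r * (sin (m * t) * cos a2 + cos (m * t) * sin a2)) with (sin (m*t) * (r * cos a2) + cos (m*t) * (r * sin a2)) by ring.
        rewrite HA, HB. unfold Pf, Qf.
        transitivity (Yf n eps t * (sin (m*t) ^ 2 + cos (m*t) ^ 2)); [rewrite Sm; ring|ring].
    + destruct (periodic n eps m Hm) as [E1 E2]. unfold theta. rewrite E1, E2. fold m. ring.
Qed.
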